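(* Let $r_1=\frac5{11}+\frac1{22\pi}$, $r_2=\frac5{11}-\frac1{220\pi}$. Let $f$ be the interval exchange transformation of $I=[-1,1)$ with alphabet $\mathcal{A}=\{A,B,C,D,E,F,G,H\}$, where the intervals $I_A,I_B,\dots,I_H$ appear in $I$ in this order from left to right, the images $f(I_D),f(I_B),f(I_E),f(I_C),f(I_H),f(I_F),f(I_A),f(I_G)$ appear in $I$ in this order from left to right, and the lengths are $$(\lambda_A,\dots,\lambda_H)=\Big(\tfrac1{20\pi},\ \tfrac12,\ \tfrac1{22}-\tfrac{21}{220\pi},\ \tfrac5{11}+\tfrac1{22\pi},\ \tfrac1{20\pi},\ \tfrac12,\ \tfrac1{22}-\tfrac{21}{220\pi},\ \tfrac5{11}+\tfrac1{22\pi}\Big)$$ (equivalently $(r_1-r_2,\ \frac12,\ r_2-2r_1+\frac12,\ r_1,\ r_1-r_2,\ \frac12,\ r_2-2r_1+\frac12,\ r_1)$). Then $f$ satisfies the modified Keane condition: $f^m(p_\alpha)\ne p_\beta$ for all $m\ge1$, all $\alpha\in\mathcal{A}$, and all $\beta\in\mathcal{A}$ with $p_\beta\notin\{-1,0\}$, where $p_\alpha$ denotes the left endpoint of $I_\alpha$.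
   Context: An interval exchange transformation of $I=[-1,1)$: a finite partition of $I$ into intervals $I_\alpha$ closed on the left and open on the right, and a bijection $f:I\to I$ whose restriction to each $I_\alpha$ is a translation; it is determined by the left-to-right order of the $I_\alpha$ in $I$, the left-to-right order of the $f(I_\alpha)$ in $I$, and the lengths $\lambda_\alpha$ of the $I_\alpha$. *)

(* Defs.v *)
From Stdlib Require Import Reals List.
Import ListNotations.
Open Scope R_scope.

Inductive letter : Type := A | B | C | D | E | F | G | H.

Definition letter_eq_dec (a b : letter) : {a = b} + {a <> b}.
Proof. decide equality. Defined.

(* Left-to-right order of the intervals I_alpha in I = [-1,1). *)
Definition top_order : list letter := [A; B; C; D; E; F; G; H].
(* Left-to-right order of the images f(I_alpha) in I. *)
Definition bot_order : list letter := [D; B; E; C; H; F; A; G].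

Definition lam (a : letter) : R :=
  match a with
  | A => 1 / (20 * PI)
  | B => 1 / 2
  | C => 1 / 22 - 21 / (220 * PI)
  | D => 5 / 11 + 1 / (22 * PI)
  | E => 1 / (20 * PI)
  | F => 1 / 2
  | G => 1 / 22 - 21 / (220 * PI)
  | H => 5 / 11 + 1 / (22 * PI)
  end.

Fixpoint sum_before (l : list letter) (a : letter) : R :=
  match l with
  | [] => 0
  | b :: l' => if letter_eq_dec a b then 0 else lam b + sum_before l' a
  end.

Definition p (a : letter) : R := -1 + sum_before top_order a.
Definition q (a : letter) : R := -1 + sum_before bot_order a.

Definition in_I (a : letter) (x : R) : bool :=
  if Rle_dec (p a) x then (if Rlt_dec x (p a + lam a) then true else false)
  else false.

(* The interval exchange f : translation by q a - p a on I_a = [p a, p a + lam a).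
   (Outside I = [-1,1) it is the identity; irrelevant since orbits stay in I.) *)
Definition iet_f (x : R) : R :=
  fold_right (fun a acc => if in_I a x then x - p a + q a else acc) x top_order.

Definition modified_keane (T : R -> R) : Prop :=
  forall (m : nat) (a b : letter), (1 <= m)%nat ->
    p b <> -1 -> p b <> 0 -> Nat.iter m T (p a) <> p b.

(* Main.v *)
Require Import Defs.
From Stdlib Require Import Reals Lra Lia ZArith List.
Open Scope R_scope.

Definition s := / PI.
Lemma s_bounds : 1/4 <= s < 1/3.
Proof.
  unfold s. pose proof PI2_3_2. pose proof PI_4. pose proof PI_RGT_0.
  split.
  - apply (Rmult_le_reg_l PI); [lra|]. field_simplify; lra.
  - apply (Rmult_lt_reg_l PI); [lra|]. field_simplify; lra.
Qed.

Ltac sol := unfold p, q, s; simpl; field; apply PI_neq0.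
Lemma lamA : lam A = s/20. Proof. unfold lam, s; field; apply PI_neq0. Qed.
Lemma pA : p A = -1. Proof. sol. Qed.
Lemma pB : p B = (-220 + 11*s)/220. Proof. sol. Qed.
Lemma pC : p Defs.C = (-110 + 11*s)/220. Proof. sol. Qed.
Lemma pD : p D = (-100 - 10*s)/220. Proof. sol. Qed.
Lemma pE : p E = 0. Proof. sol. Qed.
Lemma pF : p F = (11*s)/220. Proof. sol. Qed.
Lemma pG : p G = (110 + 11*s)/220. Proof. sol. Qed.
Lemma pH : p H = (120 - 10*s)/220. Proof. sol. Qed.
Lemma lH : p H + lam H = 1. Proof. rewrite pH; unfold lam, s; field; apply PI_neq0. Qed.
Lemma qA : q A - p A = (430 + 10*s)/220. Proof. sol. Qed.
Lemma qB : q B - p B = (100 - s)/220. Proof. sol. Qed.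
Lemma qC : q Defs.C - p Defs.C = (100 + 10*s)/220. Proof. sol. Qed.
Lemma qD : q D - p D = (-120 + 10*s)/220. Proof. sol. Qed.
Lemma qE : q E - p E = (-10 + 10*s)/220. Proof. sol. Qed.
Lemma qF : q F - p F = (100 - s)/220. Proof. sol. Qed.
Lemma qG : q G - p G = (100 + 10*s)/220. Proof. sol. Qed.
Lemma qH : q H - p H = (-120 + 10*s)/220. Proof. sol. Qed.

Lemma nA : p A + lam A = p B. Proof. sol. Qed.
Lemma nB : p B + lam B = p Defs.C. Proof. sol. Qed.
Lemma nC : p Defs.C + lam Defs.C = p D. Proof. sol. Qed.
Lemma nD : p D + lam D = p E. Proof. sol. Qed.
Lemma nE : p E + lam E = p F. Proof. sol. Qed.
Lemma nF : p F + lam F = p G. Proof. sol. Qed.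
Lemma nG : p G + lam G = p H. Proof. sol. Qed.

Lemma in_I_t a x : p a <= x < p a + lam a -> in_I a x = true.
Proof. intros [h1 h2]; unfold in_I; destruct (Rle_dec (p a) x); [|lra];
  destruct (Rlt_dec x (p a + lam a)); [reflexivity|lra]. Qed.
Lemma in_I_f a x : ~ (p a <= x < p a + lam a) -> in_I a x = false.
Proof. intros h; unfold in_I; destruct (Rle_dec (p a) x); [|reflexivity];
  destruct (Rlt_dec x (p a + lam a)); [|reflexivity]. exfalso; lra. Qed.

Ltac pnum := rewrite ?pA, ?pB, ?pC, ?pD, ?pE, ?pF, ?pG, ?pH in *.
Ltac nrw := rewrite ?nA, ?nB, ?nC, ?nD, ?nE, ?nF, ?nG, ?lH.
Ltac fl := nrw; pnum; pose proof s_bounds; lra.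
Ltac tr := nrw; pnum; pose proof s_bounds; lra.

Lemma fA x : p A <= x < p B -> iet_f x = x + (q A - p A).
Proof. intros h. unfold iet_f; cbn [fold_right top_order]. rewrite (in_I_t A) by tr. ring. Qed.
Lemma fB x : p B <= x < p Defs.C -> iet_f x = x + (q B - p B).
Proof. intros h. unfold iet_f; cbn [fold_right top_order].
  rewrite (in_I_f A) by fl. rewrite (in_I_t B) by tr. ring. Qed.
Lemma fC x : p Defs.C <= x < p D -> iet_f x = x + (q Defs.C - p Defs.C).
Proof. intros h. unfold iet_f; cbn [fold_right top_order].
  rewrite (in_I_f A) by fl. rewrite (in_I_f B) by fl. rewrite (in_I_t Defs.C) by tr. ring. Qed.
Lemma fD x : p D <= x < p E -> iet_f x = x + (q D - p D).
Proof. intros h. unfold iet_f; cbn [fold_right top_order].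
  rewrite (in_I_f A) by fl. rewrite (in_I_f B) by fl. rewrite (in_I_f Defs.C) by fl.
  rewrite (in_I_t D) by tr. ring. Qed.
Lemma fE x : p E <= x < p F -> iet_f x = x + (q E - p E).
Proof. intros h. unfold iet_f; cbn [fold_right top_order].
  rewrite (in_I_f A) by fl. rewrite (in_I_f B) by fl. rewrite (in_I_f Defs.C) by fl.
  rewrite (in_I_f D) by fl. rewrite (in_I_t E) by tr. ring. Qed.
Lemma fF x : p F <= x < p G -> iet_f x = x + (q F - p F).
Proof. intros h. unfold iet_f; cbn [fold_right top_order].
  rewrite (in_I_f A) by fl. rewrite (in_I_f B) by fl. rewrite (in_I_f Defs.C) by fl.
  rewrite (in_I_f D) by fl. rewrite (in_I_f E) by fl. rewrite (in_I_t F) by tr. ring. Qed.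
Lemma fG x : p G <= x < p H -> iet_f x = x + (q G - p G).
Proof. intros h. unfold iet_f; cbn [fold_right top_order].
  rewrite (in_I_f A) by fl. rewrite (in_I_f B) by fl. rewrite (in_I_f Defs.C) by fl.
  rewrite (in_I_f D) by fl. rewrite (in_I_f E) by fl. rewrite (in_I_f F) by fl.
  rewrite (in_I_t G) by tr. ring. Qed.
Lemma fH x : p H <= x < 1 -> iet_f x = x + (q H - p H).
Proof. intros h. unfold iet_f; cbn [fold_right top_order].
  rewrite (in_I_f A) by fl. rewrite (in_I_f B) by fl. rewrite (in_I_f Defs.C) by fl.
  rewrite (in_I_f D) by fl. rewrite (in_I_f E) by fl. rewrite (in_I_f F) by fl.
  rewrite (in_I_f G) by fl. rewrite (in_I_t H) by tr. ring. Qed.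

Definition val (u w : Z) := (IZR u + IZR w * s) / 220.
Definition II x := -1 <= x < 1.
Definition BF x := (p B <= x < p Defs.C) \/ (p F <= x < p G).

Ltac stp L Q u k := rewrite (L _) by (split; lra); rewrite Q; split;
  [ unfold II; pnum; pose proof s_bounds; lra
  | exists u, k; split; [unfold val; rewrite minus_IZR, mult_IZR; field
                        | first [left; reflexivity | right; split; [reflexivity | unfold BF; pnum; pose proof s_bounds; lra]] ]].

Lemma step x : II x -> II (iet_f x) /\ exists u k, iet_f x = x + val u (10 - 11*k)
   /\ (k = 0%Z \/ (k = 1%Z /\ BF x)).
Proof.
  intros [h0 h1]. pose proof s_bounds as hs.
  assert (hpB := pB); assert (hpC := pC); assert (hpD := pD); assert (hpE := pE);
  assert (hpF := pF); assert (hpG := pG); assert (hpH := pH); assert (hpA := pA).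
  destruct (Rlt_le_dec x (p B)).
  { stp fA qA 430%Z 0%Z. }
  destruct (Rlt_le_dec x (p Defs.C)).
  { stp fB qB 100%Z 1%Z. }
  destruct (Rlt_le_dec x (p D)).
  { stp fC qC 100%Z 0%Z. }
  destruct (Rlt_le_dec x (p E)).
  { stp fD qD (-120)%Z 0%Z. }
  destruct (Rlt_le_dec x (p F)).
  { stp fE qE (-10)%Z 0%Z. }
  destruct (Rlt_le_dec x (p G)).
  { stp fF qF 100%Z 1%Z. }
  destruct (Rlt_le_dec x (p H)).
  { stp fG qG 100%Z 0%Z. }
  { stp fH qH (-120)%Z 0%Z. }
Qed.

Lemma no3 x : BF x -> BF (iet_f x) -> ~ BF (iet_f (iet_f x)).
Proof.
  pose proof s_bounds as hs.
  assert (hpB := pB); assert (hpC := pC); assert (hpD := pD); assert (hpE := pE);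
  assert (hpF := pF); assert (hpG := pG); assert (hpH := pH); assert (hpA := pA).
  assert (hqB := qB); assert (hqF := qF).
  unfold BF. intros [h|h].
  - rewrite (fB x h). intros [h'|h'].
    + rewrite (fB _ h'). lra.
    + lra.
  - rewrite (fF x h). intros [h'|h'].
    + lra.
    + rewrite (fF _ h'). lra.
Qed.

Lemma val_add x u1 w1 u2 w2 : x + val u1 w1 + val u2 w2 = x + val (u1+u2) (w1+w2).
Proof. unfold val; rewrite !plus_IZR; field. Qed.

Lemma iter_gen n : forall y, II y -> II (Nat.iter n iet_f y) /\
  exists u K, Nat.iter n iet_f y = y + val u (10 * Z.of_nat n - 11 * K) /\ (0 <= K <= Z.of_nat n)%Z.
Proof.
  induction n as [|n IH]; intros y hy.
  - split; [exact hy|]. exists 0%Z, 0%Z. split; [|lia]. unfold val; simpl; field.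
  - destruct (IH y hy) as [hI [u [K [e hK]]]].
    destruct (step _ hI) as [hI' [u' [k [e' hk]]]].
    split; [exact hI'|]. exists (u+u')%Z, (K+k)%Z. split; [|lia].
    change (Nat.iter (S n) iet_f y) with (iet_f (Nat.iter n iet_f y)).
    rewrite e', e, val_add. f_equal; f_equal; lia.
Qed.

Lemma block3 x : II x -> II (Nat.iter 3 iet_f x) /\
  exists u K, Nat.iter 3 iet_f x = x + val u (30 - 11 * K) /\ (0 <= K <= 2)%Z.
Proof.
  intros hx.
  destruct (step _ hx) as [h1 [u0 [k0 [e0 c0]]]].
  destruct (step _ h1) as [h2 [u1 [k1 [e1 c1]]]].
  destruct (step _ h2) as [h3 [u2 [k2 [e2 c2]]]].
  split; [exact h3|].
  exists (u0+u1+u2)%Z, (k0+k1+k2)%Z. split.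
  - change (Nat.iter 3 iet_f x) with (iet_f (iet_f (iet_f x))).
    rewrite e2, e1, e0, !val_add. f_equal; f_equal; lia.
  - destruct c0 as [c0|[c0 b0]]; [lia|].
    destruct c1 as [c1|[c1 b1]]; [lia|].
    destruct c2 as [c2|[c2 b2]]; [lia|].
    exfalso; exact (no3 x b0 b1 b2).
Qed.

Lemma iter3 j : forall x, II x -> II (Nat.iter (3*j) iet_f x) /\
  exists u K, Nat.iter (3*j) iet_f x = x + val u (30 * Z.of_nat j - 11 * K) /\ (0 <= K <= 2 * Z.of_nat j)%Z.
Proof.
  induction j as [|j IH]; intros x hx.
  - split; [exact hx|]. exists 0%Z, 0%Z. split; [|lia]. unfold val; simpl; field.
  - destruct (block3 x hx) as [h1 [u [K [e hK]]]].
    destruct (IH _ h1) as [h2 [u' [K' [e' hK']]]].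
    replace (3 * S j)%nat with (3 * j + 3)%nat by lia.
    rewrite Nat.iter_add.
    split; [exact h2|]. exists (u+u')%Z, (K+K')%Z. split; [|lia].
    rewrite e', e, val_add. f_equal; f_equal; lia.
Qed.

Lemma val_inj (hirr : forall u v : Z, IZR u * PI = IZR v -> u = 0%Z) a1 b1 a2 b2 :
  val a1 b1 = val a2 b2 -> b1 = b2.
Proof.
  intros e. unfold val in e.
  assert (hP : PI <> 0) by apply PI_neq0.
  assert (hsP : s * PI = 1) by (unfold s; field; exact hP).
  assert (e1 : IZR a1 - IZR a2 = (IZR b2 - IZR b1) * s) by lra.
  assert (e2 : IZR (a1 - a2) * PI = IZR (b2 - b1)).
  { rewrite !minus_IZR, e1, Rmult_assoc, hsP; ring. }
  apply hirr in e2. assert (a1 = a2) by lia. subst.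
  assert (e3 : (IZR b2 - IZR b1) * s = 0) by lra.
  apply Rmult_integral in e3. destruct e3 as [e3|e3].
  - rewrite <- minus_IZR in e3. apply eq_IZR in e3. lia.
  - exfalso. rewrite e3 in hsP. lra.
Qed.

Lemma pv a : exists c d, p a = val c d /\
  ((a = A \/ a = B \/ a = Defs.C \/ a = E \/ a = F \/ a = G) /\ (d = 0 \/ d = 11)%Z
   \/ (a = D \/ a = H) /\ d = (-10)%Z).
Proof.
  destruct a.
  - exists (-220)%Z, 0%Z; split; [rewrite pA; unfold val; simpl; field|intuition].
  - exists (-220)%Z, 11%Z; split; [rewrite pB; unfold val; simpl; field|intuition].
  - exists (-110)%Z, 11%Z; split; [rewrite pC; unfold val; simpl; field|intuition].
  - exists (-100)%Z, (-10)%Z; split; [rewrite pD; unfold val; simpl; field|intuition].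
  - exists 0%Z, 0%Z; split; [rewrite pE; unfold val; simpl; field|intuition].
  - exists 0%Z, 11%Z; split; [rewrite pF; unfold val; simpl; field|intuition].
  - exists 110%Z, 11%Z; split; [rewrite pG; unfold val; simpl; field|intuition].
  - exists 120%Z, (-10)%Z; split; [rewrite pH; unfold val; simpl; field|intuition].
Qed.

Lemma pv2 b : p b <> -1 -> p b <> 0 -> exists c d, p b = val c d /\ (d = 11 \/ d = -10)%Z.
Proof.
  intros h1 h2. destruct b.
  - exfalso; apply h1, pA.
  - exists (-220)%Z, 11%Z; split; [rewrite pB; unfold val; simpl; field|lia].
  - exists (-110)%Z, 11%Z; split; [rewrite pC; unfold val; simpl; field|lia].
  - exists (-100)%Z, (-10)%Z; split; [rewrite pD; unfold val; simpl; field|lia].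
  - exfalso; apply h2, pE.
  - exists 0%Z, 11%Z; split; [rewrite pF; unfold val; simpl; field|lia].
  - exists 110%Z, 11%Z; split; [rewrite pG; unfold val; simpl; field|lia].
  - exists 120%Z, (-10)%Z; split; [rewrite pH; unfold val; simpl; field|lia].
Qed.

Lemma pI a : II (p a).
Proof. unfold II; destruct a; pnum; pose proof s_bounds; lra. Qed.

Lemma main_lemma (hirr : forall u v : Z, IZR u * PI = IZR v -> u = 0%Z) :
  modified_keane iet_f.
Proof.
  unfold modified_keane. intros m a b hm hb1 hb2 heq.
  destruct (pv2 b hb1 hb2) as [cb [db [eb hdb]]].
  destruct (pv a) as [ca [da [ea hda]]].
  pose (j := (m / 3)%nat). pose (r := (m mod 3)%nat).
  assert (hm' : m = (r + 3 * j)%nat) by (unfold r, j; pose proof (Nat.div_mod_eq m 3); lia).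
  assert (hr : (r < 3)%nat) by (unfold r; apply Nat.mod_upper_bound; lia).
  rewrite hm', Nat.iter_add in heq.
  destruct (iter3 j (p a) (pI a)) as [h1 [u [K [e hK]]]].
  destruct (iter_gen r _ h1) as [_ [u' [K' [e' hK']]]].
  rewrite e', e, ea, eb in heq.
  assert (heq2 : val (ca + u + u') (da + (30 * Z.of_nat j - 11 * K) + (10 * Z.of_nat r - 11 * K')) = val cb db).
  { rewrite <- heq. unfold val. rewrite !plus_IZR. field. }
  apply (val_inj hirr) in heq2.
  clear - heq2 hK hK' hdb hda hm hm' hr.
  destruct hda as [[_ hd]|[_ hd]]; lia.
Qed.

From mathcomp Require Import all_boot all_order all_algebra.
From mathcomp Require Import all_classical all_reals.
From mathcomp Require Import topology normedtype sequences trigo pi_irrational.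
From mathcomp Require Import Rstruct Rstruct_topology.
Import Order.TTheory GRing.Theory Num.Theory.
Import numFieldNormedType.Exports.
Local Open Scope ring_scope.

Lemma RcosE (x : R) : Rtrigo_def.cos x = trigo.cos x.
Proof.
apply/esym; rewrite /Rtrigo_def.cos; case: (exist_cos (Rsqr x)) => y.
rewrite /cos_in /infinite_sum /= => cos_ub.
rewrite -(cvg_lim _ (@cvg_cos_coeff' R x)) //.
apply: (@cvg_lim R^o) => //.
rewrite /series /=.
rewrite -cvg_shiftS /=; apply/cvgrPdist_lt => /= e /RltP /cos_ub[N Nub].
near=> n.
have nN : (n >= N)%coq_nat by apply/ssrnat.leP; near: n; exact: nbhs_infty_ge.
move: Nub => /(_ _ nN) /[!RdistE] /RltP /=.
rewrite distrC sum_f_R0E; congr (`| _ - _ | < e).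
apply: eq_bigr=> k _; rewrite /cos_n /cos_coeff' RdivE !RpowE factE INRE /Rsqr. have ->: Rmult x x = x ^+ 2 by rewrite expr2. rewrite -exprM -mul2n. have ->: (2 * k)%coq_nat = (2 * k)%N by []. by rewrite mulrAC.

Unshelve. all: by end_near. Qed.

Lemma E2 : (2%:R : R) = IZR 2.
Proof. rewrite mulr2n; change (Rplus (IZR 1) (IZR 1) = IZR 2); lra. Qed.

Lemma PIE : PI = trigo.pi.
Proof.
have h1 : PI / 2 = trigo.pi / 2.
  apply: cos_02_uniq.
  - have := PI_RGT_0; have := PI_4 => h4 h0.
    apply/andP; split; apply/RleP; rewrite -RdivE E2; [change (Rle (IZR 0) (PI / IZR 2)) | ]; lra.
  - by rewrite -RcosE -RdivE E2 cos_PI2.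
  - by case: (@pihalf_02_cos_pihalf R).
  - by case: (@pihalf_02_cos_pihalf R).
move: h1; rewrite -!RdivE E2 => h1.
have : Rmult (Rdiv PI (IZR 2)) (IZR 2) = Rmult (Rdiv trigo.pi (IZR 2)) (IZR 2) by rewrite h1.
lra.
Qed.

Lemma PI_irr (u v : Z) : Rmult (IZR u) PI = IZR v -> u = Z0.
Proof.
move=> h.
have key : forall u1 v1 : Z, Z.lt Z0 u1 -> Rmult (IZR u1) PI = IZR v1 -> False.
  clear u v h; move=> u v hu e.
  have hh := @pi_irrational.pi_irrationnal R. apply: hh. apply/rationalP.
  rewrite -PIE.
  exists (if Z.leb Z0 v then Posz (Z.to_nat v) else - Posz (Z.to_nat (Z.opp v))).
  exists (Z.to_nat u).
  have hu' : IZR u = INR (Z.to_nat u) by rewrite INR_IZR_INZ Z2Nat.id //; lia.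
  have hv : IZR v = ((if Z.leb Z0 v then Posz (Z.to_nat v) else - Posz (Z.to_nat (Z.opp v)))%:~R).
    case: Z.leb_spec0 => hv.
      by transitivity (INR (Z.to_nat v)); [rewrite INR_IZR_INZ Z2Nat.id // | rewrite INRE].
    rewrite mulrNz; transitivity (- INR (Z.to_nat (Z.opp v))); last by rewrite INRE.
    rewrite INR_IZR_INZ Z2Nat.id; last lia.
    by rewrite opp_IZR RoppE opprK.
  rewrite -hv -INRE -hu' -RdivE.
  have : IZR u <> IZR Z0 by apply: IZR_neq; lia.
  move=> nz; rewrite -e; change (PI = Rdiv (Rmult (IZR u) PI) (IZR u)); field; exact nz.
case: (Z.lt_total u Z0) => [hneg|[//|hpos]].
  exfalso; apply: (key (Z.opp u) (Z.opp v)); first lia.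
  rewrite !opp_IZR -h; ring.
by exfalso; apply: (key u v).
Qed.

Theorem proposition8p5 : modified_keane iet_f.
Proof. exact (main_lemma PI_irr). Qed.
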